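(* The map $f$ defined below restricts to a bijection from $\mathcal{G}_1$ onto $\mathcal{A}_1$, and $f(\pi)$ is a partition of the same integer as $\pi$.
   Context: Partitions are nonincreasing finite sequences of positive integers; $m_j(\pi)$ is the multiplicity of $j$ in $\pi$, $\ell(\pi)$ the number of parts, and $\pi\cup\lambda$ the partition formed by all parts of both (as a multiset). $\langle a^{m}\rangle$ denotes the partition consisting of $m$ copies of $a$. $\mathcal{G}_2$ is the set of partitions $\pi$ with $m_1(\pi)\le 1$ and $m_j(\pi)+m_{j+1}(\pi)\le 2$ for all $j\ge1$. $\mathcal{G}_1$ is the set of partitions $\pi$ with $m_1(\pi)=0$ and $m_j(\pi)+m_{j+1}(\pi)\le 2$ for all $j\ge1$ (so $\mathcal G_1\subset\mathcal G_2$). For $\pi\in\mathcal{G}_2$ every part has multiplicity at most $2$. Let $D(\pi)$ be the number of distinct parts of multiplicity $2$, let $R_1(\pi)>R_2(\pi)>\dots>R_{D(\pi)}(\pi)$ be these parts, and set $R_{D(\pi)+1}(\pi)=0$, $R_0(\pi)=\infty$. For $0\le k\le D(\pi)$ let $\pi^{(k)}$ be the partition consisting of the parts of $\pi$ strictly between $R_{k+1}(\pi)$ and $R_k(\pi)$ (these parts are distinct). For a partition $\mu$ and integer $c$, $\mu+\langle c^{\ell(\mu)}\rangle$ denotes $\mu$ with $c$ added to each part. Define $$f(\pi)=\bigcup_{i=1}^{D(\pi)}\big\langle (2i)^{R_i(\pi)-R_{i+1}(\pi)-\ell(\pi^{(i)})}\big\rangle\ \cup\ \bigcup_{i=0}^{D(\pi)}\Big(\pi^{(i)}+\langle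 (2i)^{\ell(\pi^{(i)})}\rangle\Big).$$ For a partition $\lambda$, $R_1(\lambda)$ is its largest part of multiplicity $\ge2$ (or $0$ if none). $\mathcal{A}_1$ is the set of partitions $\lambda$ such that $m_j(\lambda)\le1$ for odd $j$, $m_j(\lambda)=0$ for odd $j<R_1(\lambda)+2$, and $m_j(\lambda)\ge 2$ for even $j$ with $0<j<R_1(\lambda)$. *)

(* Defs.v *)
From mathcomp Require Import all_boot.
Set Implicit Arguments. Unset Strict Implicit. Unset Printing Implicit Defensive.

Definition is_partition (p : seq nat) : bool :=
  sorted geq p && all (fun x => 0 < x) p.

Definition mult (j : nat) (p : seq nat) : nat := count_mem j p.

Definition in_G2 (p : seq nat) : Prop :=
  is_partition p /\ mult 1 p <= 1 /\
  (forall j, 1 <= j -> mult j p + mult j.+1 p <= 2).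

Definition in_G1 (p : seq nat) : Prop :=
  is_partition p /\ mult 1 p = 0 /\
  (forall j, 1 <= j -> mult j p + mult j.+1 p <= 2).

Definition Rlist (p : seq nat) : seq nat :=
  sort geq (undup [seq x <- p | mult x p == 2]).

Definition Dnum (p : seq nat) : nat := size (Rlist p).

(* R_k(p) for k >= 1 (R_{D+1} = 0 since nth defaults to 0) *)
Definition Rk (p : seq nat) (k : nat) : nat := nth 0 (Rlist p) k.-1.

(* p^(k): parts strictly between R_{k+1} and R_k, with R_0 = infinity *)
Definition piK (p : seq nat) (k : nat) : seq nat :=
  [seq x <- p | (Rk p k.+1 < x) && ((k == 0) || (x < Rk p k))].

(* the map f; the multiset union is realised by concatenation followed by
   sorting in nonincreasing order *)
Definition fmap (p : seq nat) : seq nat :=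
  sort geq
    (flatten [seq nseq (Rk p i - Rk p i.+1 - size (piK p i)) (2 * i)
             | i <- iota 1 (Dnum p)]
     ++ flatten [seq map (addn (2 * i)) (piK p i) | i <- iota 0 (Dnum p).+1]).

(* R_1(l): largest part of multiplicity >= 2, or 0 if none *)
Definition R1 (l : seq nat) : nat := \max_(x <- l | 2 <= mult x l) x.

Definition in_A1 (l : seq nat) : Prop :=
  is_partition l /\
  (forall j, odd j -> mult j l <= 1) /\
  (forall j, odd j -> j < R1 l + 2 -> mult j l = 0) /\
  (forall j, ~~ odd j -> 0 < j -> j < R1 l -> 2 <= mult j l).

(* Main.v *)
Require Import Defs.
From mathcomp Require Import all_boot.
From mathcomp Require Import zify.
Set Implicit Arguments. Unset Strict Implicit. Unset Printing Implicit Defensive.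

Definition cp (p : seq nat) : seq nat :=
  flatten [seq nseq (Rk p i - Rk p i.+1 - size (piK p i)) (2 * i)
             | i <- iota 1 (Dnum p)].
Definition bp (p : seq nat) : seq nat :=
  flatten [seq map (addn (2 * i)) (piK p i) | i <- iota 0 (Dnum p).+1].

Lemma fmapE p : fmap p = sort geq (cp p ++ bp p).
Proof. by []. Qed.

Lemma geq_total : total geq.
Proof. by move=> a b; apply: leq_total. Qed.
Lemma geq_trans : transitive geq.
Proof. by move=> a b c /= h1 h2; apply: leq_trans h2 h1. Qed.
Lemma geq_anti : antisymmetric geq.
Proof. by move=> a b /andP[/= h1 h2]; apply/eqP; rewrite eqn_leq h1 h2. Qed.

Lemma sort_perm_sorted s l : sorted geq l -> perm_eq s l -> sort geq s = l.
Proof.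
move=> sl pe; rewrite (perm_sortP geq_total geq_trans geq_anti _ l pe).
by apply: sorted_sort sl; apply: geq_trans.
Qed.

Lemma perm_countP (s1 s2 : seq nat) :
  (forall v, count_mem v s1 = count_mem v s2) -> perm_eq s1 s2.
Proof. by move=> h; apply/allP => x _ /=; rewrite h. Qed.

Lemma perm_count_mem (s1 s2 : seq nat) v : perm_eq s1 s2 -> count_mem v s1 = count_mem v s2.
Proof. by move/permP => h; apply: h. Qed.

Lemma count_mem_filter (P : pred nat) v s :
  count_mem v (filter P s) = (P v) * count_mem v s.
Proof.
rewrite count_filter; case Pv: (P v); rewrite ?mul1n ?mul0n.
  by apply: eq_count => x /=; case: eqP => // ->; rewrite Pv.
rewrite (eq_count (a2 := pred0)) ?count_pred0 // => x /=.
by case: eqP => // ->; rewrite Pv.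
Qed.

Lemma count_mem_addn k v s :
  count_mem v (map (addn k) s) = if k <= v then count_mem (v - k) s else 0.
Proof.
rewrite count_map; case: ifP => h.
  by apply: eq_count => x /=; apply/eqP/eqP; lia.
rewrite (eq_count (a2 := pred0)) ?count_pred0 // => x /=; apply/eqP; lia.
Qed.

Lemma count_le1_uniq (s : seq nat) : (forall x, count_mem x s <= 1) -> uniq s.
Proof.
move=> h; apply: count_mem_uniq => x; have := h x.
case: (boolP (x \in s)) => [xs|/count_memPn -> //].
by rewrite -has_pred1 has_count in xs; move: xs; case: (count_mem x s) => [|[]].
Qed.

Lemma count_uniq_le1 (s : seq nat) x : uniq s -> count_mem x s <= 1.
Proof. by move=> u; rewrite count_uniq_mem //; case: (x \in s). Qed.

Lemma count_gt0_mem (s : seq nat) x : 0 < count_mem x s -> x \in s.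
Proof. by rewrite -has_count has_pred1. Qed.

Lemma filter_all (P : pred nat) s : all P s -> filter P s = s.
Proof. by move/all_filterP. Qed.

Lemma filter_none (P : pred nat) s : all (predC P) s -> filter P s = [::].
Proof.
move=> h; rewrite (eq_in_filter (a2 := pred0)) ?filter_pred0 // => x xs.
by have := allP h x xs => /= /negbTE.
Qed.

Lemma split_perm (P : pred nat) a a' b b' :
  all P a -> all P a' -> all (predC P) b -> all (predC P) b' ->
  perm_eq (a ++ b) (a' ++ b') -> perm_eq a a' /\ perm_eq b b'.
Proof.
move=> ha ha' hb hb' pe; split.
  have := perm_filter P pe; rewrite !filter_cat (filter_all ha) (filter_all ha').
  by rewrite (filter_none hb) (filter_none hb') !cats0.
have := perm_filter (predC P) pe; rewrite !filter_cat.
have e1 : filter (predC P) a = [::] by apply: filter_none; apply/allP => x /(allP ha) /= ->.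
have e2 : filter (predC P) a' = [::] by apply: filter_none; apply/allP => x /(allP ha') /= ->.
by rewrite e1 e2 !filter_all.
Qed.

Lemma sumn_addn k s : sumn (map (addn k) s) = k * size s + sumn s.
Proof. elim: s => [|x s IH] /=; first by rewrite muln0. rewrite IH mulnS; lia. Qed.

Lemma sorted_cat_last (s : seq nat) r :
  sorted geq s -> all (fun x => r <= x) s -> sorted geq (s ++ [:: r]).
Proof.
elim: s => //= x s IH.
case: s IH => [|y s] IH /=; first by rewrite andbT.
move=> /andP[xy ps] /andP[_ hs]; rewrite xy /=.
by apply: IH.
Qed.

Lemma sorted_split (s : seq nat) t :
  sorted geq s -> s = filter (fun x => t <= x) s ++ filter (fun x => x < t) s.
Proof.
elim: s => //= a s IH ps.
have sa : all (geq a) s by exact: (order_path_min geq_trans ps).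
have ss : sorted geq s by apply: path_sorted ps.
case: (leqP t a) => h /=; first by rewrite -IH.
rewrite filter_none ?filter_all //.
- by apply/allP => x /(allP sa) /= xa; lia.
- by apply/allP => x /(allP sa) /= xa; rewrite -ltnNge; lia.
Qed.

Lemma sorted_cat_geq (s1 s2 : seq nat) : sorted geq s1 -> sorted geq s2 ->
  (forall x y, x \in s1 -> y \in s2 -> y <= x) -> sorted geq (s1 ++ s2).
Proof.
case: s1 => [//|x s1] /= h1 h2 h; rewrite cat_path h1 /=.
case: s2 h2 h => //= y s2 -> h; rewrite andbT.
by apply: h; [exact: mem_last|rewrite inE eqxx].
Qed.

Lemma mem_map_addn k x (s : seq nat) :
  (x \in map (addn k) s) = (k <= x) && (x - k \in s).
Proof.
rewrite -!has_pred1 !has_count count_mem_addn; by case: ifP.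
Qed.

Lemma filter_pred1_nseq (s : seq nat) x : filter (pred1 x) s = nseq (count_mem x s) x.
Proof. by elim: s => //= y s ->; case: eqP => // ->. Qed.

Lemma uniq_interval (B : seq nat) a n :
  uniq B -> all (fun x => a <= x < a + n) B -> size B <= n.
Proof.
move=> u h; rewrite -(size_iota a n); apply: uniq_leq_size => // x /(allP h).
by rewrite mem_iota.
Qed.

Lemma bigmax_mem (P : pred nat) (s : seq nat) :
  \max_(x <- s | P x) x \in 0 :: [seq x <- s | P x].
Proof.
elim: s => [|a s IH]; first by rewrite big_nil inE.
rewrite big_cons /=; case: ifP => h.
  rewrite /maxn; case: ltnP => _; last by rewrite !inE eqxx orbT.
  move: IH; rewrite !inE; case/orP=> [/eqP -> //|H].
  by rewrite H !orbT.
by move: IH; rewrite !inE.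
Qed.

Lemma R1_max (l : seq nat) : R1 l \in 0 :: [seq x <- l | 2 <= mult x l].
Proof. exact: bigmax_mem. Qed.

Lemma R1_char (l : seq nat) m :
  (forall x, 2 <= mult x l -> x <= m) -> (m = 0 \/ 2 <= mult m l) -> R1 l = m.
Proof.
move=> h1 h2; apply/eqP; rewrite eqn_leq; apply/andP; split.
  by apply/bigmax_leqP_seq => x _; apply: h1.
case: h2 => [-> //|h].
apply: (@leq_bigmax_seq nat l (fun x => 2 <= mult x l) (fun x => x) m) => //.
by apply: count_gt0_mem; rewrite /mult in h; lia.
Qed.

Lemma mult_gt_R1 (l : seq nat) x : R1 l < x -> mult x l <= 1.
Proof.
move=> h; rewrite leqNgt; apply/negP => m2.
have : x <= R1 l.
  apply: (@leq_bigmax_seq nat l (fun x => 2 <= mult x l) (fun x => x) x) => //.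
  by apply: count_gt0_mem; rewrite /mult in m2; lia.
by lia.
Qed.

Lemma mem_Rlist p x : (x \in Rlist p) = (mult x p == 2).
Proof.
rewrite /Rlist mem_sort mem_undup mem_filter.
apply/andP/idP => [[] //|h]; split => //.
by apply: count_gt0_mem; move/eqP: h; rewrite /mult => ->.
Qed.

Lemma Rlist_uniq p : uniq (Rlist p).
Proof. by rewrite /Rlist sort_uniq undup_uniq. Qed.

Lemma Rlist_sorted p : sorted geq (Rlist p).
Proof. exact: sort_sorted geq_total _. Qed.

Lemma Rlist_char p s : sorted geq s -> uniq s ->
  (forall x, (x \in s) = (mult x p == 2)) -> Rlist p = s.
Proof.
move=> ss us hs; rewrite /Rlist; apply: sort_perm_sorted => //.
apply: uniq_perm => //; first exact: undup_uniq.
move=> x; rewrite mem_undup mem_filter hs; apply/andP/idP => [[] //|h]; split => //.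
by apply: count_gt0_mem; move/eqP: h; rewrite /mult => ->.
Qed.

Lemma G1_ge2 p : in_G1 p -> all (fun x => 2 <= x) p.
Proof.
case=> /andP[_ pos] [m1 _]; apply/allP => x xp.
have := allP pos x xp => /= x0.
case: (ltnP x 2) => // x2; have x1 : x = 1 by lia.
by move: m1; rewrite /mult; subst x; move/count_memPn; rewrite xp.
Qed.

Lemma G1_mult_le2 p x : in_G1 p -> mult x p <= 2.
Proof.
move=> G; case: x => [|x].
  have := G1_ge2 G => a; rewrite /mult; apply: leq_trans (_ : 0 <= 2) => //.
  apply: eq_leq; apply/count_memPn; apply/negP => /(allP a) //.
by case: G => _ [_ h]; have := h x.+1 isT; lia.
Qed.

Section Compose.
Variables (p' B : seq nat) (r : nat).
Hypotheses (G : in_G1 p') (hr : 2 <= r) (uB : uniq B) (sB : sorted geq B)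
  (aB : all (fun x => 2 <= x <= r - 2) B).

Let p := map (addn r) p' ++ r :: r :: B.

Lemma comp_mult x : mult x p =
  (if r <= x then mult (x - r) p' else 0) + (r == x) * 2 + count_mem x B.
Proof.
rewrite /p /mult count_cat count_mem_addn /=. lia.
Qed.

Lemma comp_multB x : count_mem x B = (x \in B).
Proof. exact: count_uniq_mem. Qed.

Lemma comp_mult_lt x : x < r -> mult x p = count_mem x B.
Proof.
move=> h; rewrite comp_mult; case: ifP => h1; first by lia.
by case: eqP => e; [lia|].
Qed.

Lemma comp_B_lt x : x \in B -> 2 <= x /\ x + 2 <= r.
Proof. by move/(allP aB) => /= /andP[h1 h2]; lia. Qed.

Lemma comp_mult_r : mult r p = 2.
Proof.
rewrite comp_mult leqnn subnn eqxx.
have -> : mult 0 p' = 0.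
  apply/count_memPn; apply/negP => /(allP (G1_ge2 G)) //.
have -> : count_mem r B = 0.
  apply/count_memPn; apply/negP => /comp_B_lt [? ?]; lia.
by [].
Qed.

Lemma comp_mult_gt x : r < x -> mult x p = mult (x - r) p'.
Proof.
move=> h; rewrite comp_mult ifT; last by lia.
have -> : count_mem x B = 0 by apply/count_memPn; apply/negP => /comp_B_lt [? ?]; lia.
by case: eqP => e; [lia|rewrite /= addn0 addn0].
Qed.

Lemma comp_in_G1 : in_G1 p.
Proof.
have a2 := G1_ge2 G.
case: (G) => /andP[sp' pos'] [m1' h'].
split; [apply/andP; split|split].
- rewrite /p; apply: sorted_cat_geq.
  + by apply: homo_sorted sp' => a b /=; rewrite leq_add2l.
  + rewrite -[r :: r :: B]/([:: r; r] ++ B); apply: sorted_cat_geq => //=.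
      by rewrite leqnn.
    by move=> a b; rewrite !inE => /orP[] /eqP -> /comp_B_lt [? ?]; lia.
  + move=> a b /mapP[y yp ->]; rewrite !inE => /orP[/eqP ->|/orP[/eqP ->|/comp_B_lt [? ?]]]; lia.
- rewrite /p all_cat /= !all_map; apply/andP; split.
    by apply/allP => x _ /=; lia.
  apply/and3P; split; try lia.
  by apply/allP => x /comp_B_lt [? ?]; lia.
- by rewrite comp_mult_lt //; apply/count_memPn; apply/negP => /comp_B_lt [? ?]; lia.
- move=> j j1.
  case: (ltngtP (j.+1) r) => h.
  + rewrite !comp_mult_lt; try lia.
    rewrite !comp_multB; case: (boolP (j \in B)); case: (boolP (j.+1 \in B)) => //.
  + case: (ltngtP j r) => h2; first by lia.
    * rewrite !comp_mult_gt; try lia.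
      have -> : j.+1 - r = (j - r).+1 by lia.
      by apply: h'; lia.
    * by subst j; rewrite comp_mult_r comp_mult_gt // subSnn m1'.
  + rewrite comp_mult_lt; last by lia.
    rewrite h comp_mult_r; suff -> : count_mem j B = 0 by [].
    by apply/count_memPn; apply/negP => /comp_B_lt [? ?]; lia.
Qed.

Lemma comp_Rlist : Rlist p = map (addn r) (Rlist p') ++ [:: r].
Proof.
have a2 := G1_ge2 G.
have R2 : forall y, y \in Rlist p' -> 2 <= y.
  move=> y; rewrite mem_Rlist => /eqP h; apply: (allP a2).
  by apply: count_gt0_mem; rewrite -/(mult y p') h.
apply: Rlist_char.
- apply: sorted_cat_geq => //.
  + by apply: homo_sorted (Rlist_sorted p') => a b /=; rewrite leq_add2l.
  + by move=> a b /mapP[y _ ->]; rewrite inE => /eqP ->; lia.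
- rewrite cat_uniq map_inj_uniq ?Rlist_uniq /=; last exact: addnI.
  rewrite orbF andbT; apply/negP => /mapP[y /R2 yp]; lia.
- move=> x; rewrite mem_cat inE mem_map_addn mem_Rlist.
  case: (ltngtP x r) => h.
  + rewrite comp_mult_lt //=; have := count_uniq_le1 x uB.
    by case: eqP => // ->.
  + by rewrite comp_mult_gt //= orbF.
  + by subst x; rewrite comp_mult_r orbT.
Qed.

Lemma comp_Dnum : Dnum p = (Dnum p').+1.
Proof. by rewrite /Dnum comp_Rlist size_cat size_map addn1. Qed.

Lemma Rk_last q : Rk q (Dnum q).+1 = 0.
Proof. by rewrite /Rk nth_default. Qed.

Lemma comp_Rk k : 1 <= k <= (Dnum p').+1 -> Rk p k = Rk p' k + r.
Proof.
move=> /andP[k1 k2]; rewrite /Rk comp_Rlist nth_cat size_map.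
case: ifP => h.
  by rewrite (nth_map 0) // addnC.
have -> : k.-1 = size (Rlist p') by move: h k2; rewrite /Dnum => h k2; lia.
by rewrite subnn /= nth_default.
Qed.

Lemma comp_Rk_big k : (Dnum p').+1 < k -> Rk p k = 0.
Proof.
by move=> h; rewrite /Rk nth_default // -/(Dnum p) comp_Dnum; lia.
Qed.

Lemma comp_piK k : k <= Dnum p' -> piK p k = map (addn r) (piK p' k).
Proof.
move=> hk; rewrite /piK /p filter_cat filter_map.
rewrite (comp_Rk (k := k.+1)); last by lia.
rewrite [X in _ ++ X]filter_none ?cats0.
  congr map; apply: eq_filter => y /=.
  rewrite [r + y]addnC ltn_add2r; congr andb.
  case: k hk => //= k hk; rewrite comp_Rk; last by lia.
  by rewrite ltn_add2r.
rewrite /= !ltnNge !leq_addl /=; apply/allP => x /comp_B_lt [? ?] /=.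
rewrite negb_and; apply/orP; left; lia.
Qed.

Lemma comp_piK_last : piK p (Dnum p').+1 = B.
Proof.
rewrite /piK comp_Rk_big; last by lia.
rewrite comp_Rk; last by lia.
rewrite Rk_last add0n /p filter_cat (filter_none (s := map _ _)) /=.
- rewrite ltnn andbF filter_all //.
  by apply/allP => x /comp_B_lt [? ?] /=; lia.
- by apply/allP => x /mapP[y _ ->] /=; lia.
Qed.

Lemma comp_cp : cp p = cp p' ++ nseq (r - size B) (2 * Dnum p).
Proof.
rewrite /cp comp_Dnum.
have -> : iota 1 (Dnum p').+1 = iota 1 (Dnum p') ++ [:: (Dnum p').+1].
  rewrite -[(Dnum p').+1]addn1 iotaD add1n. by rewrite addn1.
rewrite map_cat flatten_cat /= cats0.
congr (_ ++ _).
  congr flatten; apply/eq_in_map => i; rewrite mem_iota => hi.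
  rewrite comp_piK ?size_map; last by lia.
  rewrite comp_Rk; last by lia.
  by rewrite comp_Rk ?subnDr //; lia.
rewrite comp_piK_last (comp_Rk_big (k := (Dnum p').+2)) //.
rewrite (comp_Rk (k := (Dnum p').+1)); last by lia.
by rewrite Rk_last add0n subn0.
Qed.

Lemma comp_bp : bp p = map (addn r) (bp p') ++ map (addn (2 * Dnum p)) B.
Proof.
rewrite /bp comp_Dnum.
have -> : iota 0 (Dnum p').+2 = iota 0 (Dnum p').+1 ++ [:: (Dnum p').+1].
  by rewrite -[(Dnum p').+2]addn1 iotaD.
rewrite map_cat flatten_cat [flatten (map _ [:: _])]/= cats0.
rewrite comp_piK_last map_flatten -map_comp; congr (flatten _ ++ _).
apply/eq_in_map => i; rewrite mem_iota => hi /=.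
rewrite comp_piK; last by lia.
by rewrite -!map_comp; apply: eq_map => y /=; rewrite addnCA.
Qed.
End Compose.

Lemma decomp p : in_G1 p -> 0 < Dnum p -> exists p' r B,
  p = map (addn r) p' ++ r :: r :: B /\
  [/\ in_G1 p', 2 <= r, uniq B, sorted geq B & all (fun x => 2 <= x <= r - 2) B].
Proof.
move=> G D0.
have ex : exists x, mult x p == 2.
  move: D0; rewrite /Dnum; case E: (Rlist p) => [|x0 s] //= _.
  by exists x0; rewrite -mem_Rlist E inE eqxx.
case: (ex_minnP ex) => r hr hmin.
have a2 := G1_ge2 G.
case: (G) => /andP[sp pos] [m1 h].
have rp : r \in p by apply: count_gt0_mem; move/eqP: hr; rewrite /mult => ->.
have r2 : 2 <= r by apply: (allP a2).
have mr : mult r p = 2 by apply/eqP.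
have mr1 : mult r.+1 p = 0 by have := h r (ltnW r2); lia.
have mrm1 : mult r.-1 p = 0.
  have r1 : 0 < r.-1 by lia.
  have := h r.-1 r1; rewrite prednK; lia.
have sp2 := sorted_split r.+1 sp.
have ssp : sorted geq [seq x <- p | x < r.+1] by exact: (sorted_filter geq_trans _ sp).
have sp3 := sorted_split r ssp.
have e1 : [seq x <- [seq x <- p | x < r.+1] | r <= x] = [:: r; r].
  rewrite -filter_predI (eq_filter (a2 := pred1 r)).
    by rewrite filter_pred1_nseq -/(mult r p) mr.
  by move=> x /=; rewrite eqn_leq ltnS andbC.
have e2 : [seq x <- [seq x <- p | x < r.+1] | x < r] = [seq x <- p | x < r].
  rewrite -filter_predI; apply: eq_filter => x /=.
  by case: (ltnP x r) => hx //=; lia.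
set B := [seq x <- p | x < r] in e2.
set q := [seq x <- p | r < x].
have eq : [seq x <- p | r.+1 <= x] = q by [].
exists (map (subn^~ r) q), r, B.
have multq : forall j, 0 < j -> mult j (map (subn^~ r) q) = mult (j + r) p.
  move=> j j0; rewrite /mult count_map /q count_filter; apply: eq_count => x /=.
  apply/idP/idP.
    by move=> /andP[/eqP e f]; apply/eqP; lia.
  by move=> /eqP ->; apply/andP; split; [apply/eqP; lia|lia].
split.
  rewrite {1}sp2 eq sp3 e1 e2 -map_comp map_id_in //.
  by move=> x; rewrite mem_filter => /andP[xr _] /=; lia.
split => //.
- split; [apply/andP; split|split].
  + apply: homo_sorted; last by exact: (sorted_filter geq_trans _ sp).
    by move=> a b /=; apply: leq_sub2r.
  + by apply/allP => x /mapP[y]; rewrite mem_filter => /andP[yr _] -> /=; lia.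
  + by rewrite multq // add1n mr1.
  + move=> j j1; rewrite !multq //; have := h (j + r); rewrite addSn; lia.
- apply: count_le1_uniq => x; rewrite count_mem_filter.
  case: (ltnP x r) => hx /=; last by rewrite mul0n.
  rewrite mul1n; have := G1_mult_le2 x G; case: (ltngtP (mult x p) 2) => // e _.
  by have := hmin x; rewrite e eqxx => /(_ isT); lia.
- by exact: (sorted_filter geq_trans _ sp).
- apply/allP => x; rewrite mem_filter => /andP[xr xp] /=.
  have := allP a2 x xp => /= x2; rewrite x2 /=.
  case: (ltnP x r.-1) => hx; first by lia.
  have xe : x = r.-1 by lia.
  by move: xp; rewrite xe -has_pred1 has_count -/(mult _ p) mrm1.
Qed.

Lemma base_Rlist p : Dnum p = 0 -> Rlist p = [::].
Proof. by rewrite /Dnum => /eqP; rewrite size_eq0 => /eqP. Qed.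

Lemma base_cp p : Dnum p = 0 -> cp p = [::].
Proof. by rewrite /cp => ->. Qed.

Lemma base_bp p : in_G1 p -> Dnum p = 0 -> bp p = p.
Proof.
move=> G D0; rewrite /bp D0 /= cats0 /piK /Rk base_Rlist //=.
case: G => /andP[_ pos] _.
rewrite (eq_filter (a2 := fun x => 0 < x)); last by move=> x; rewrite andbT.
by rewrite filter_all // map_id_in.
Qed.

Lemma base_uniq p : in_G1 p -> Dnum p = 0 -> uniq p.
Proof.
move=> G D0; apply: count_le1_uniq => x.
have := G1_mult_le2 x G; case: (ltngtP (mult x p) 2) => //; rewrite /mult; try lia.
by move=> e; have := mem_Rlist p x; rewrite base_Rlist // /mult e.
Qed.

Lemma size_B (B : seq nat) r : 2 <= r -> uniq B -> all (fun x => 2 <= x <= r - 2) B ->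
  size B + 2 <= r.
Proof.
move=> hr uB aB; have := @uniq_interval B 2 (r - 3) uB.
have : all (fun x => 2 <= x < 2 + (r - 3)) B.
  by apply/allP => x /(allP aB) /= /andP[h1 h2]; apply/andP; split => //; lia.
by move=> h /(_ h); lia.
Qed.

Definition Inv p :=
  [/\ all (fun y => 2 * Dnum p + 2 <= y) (bp p), uniq (bp p),
     all (fun v => ~~ odd v && (0 < v <= 2 * Dnum p)) (cp p),
     (forall i, 0 < i <= Dnum p -> 2 <= count_mem (2 * i) (cp p)) &
     size (bp p) + 2 * Dnum p = size p /\ sumn (cp p) + sumn (bp p) = sumn p].

Lemma inv_all n p : size p <= n -> in_G1 p -> Inv p.
Proof.
elim: n p => [|n IH] p sz G.
  have D0 : Dnum p = 0.
    by move: sz; rewrite leqn0 size_eq0 => /eqP ->; rewrite /Dnum /Rlist.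
  split; rewrite ?base_cp ?base_bp ?D0 //=.
  - by case: G => /andP[_ _] _; move: sz; rewrite leqn0 size_eq0 => /eqP ->.
  - by move: sz; rewrite leqn0 size_eq0 => /eqP ->.
  - by move=> i; lia.
  - by rewrite addn0.
case: (posnP (Dnum p)) => D0.
  split; rewrite ?base_cp ?base_bp ?D0 //=.
  - by rewrite muln0 add0n; exact: G1_ge2.
  - exact: base_uniq.
  - by move=> i; lia.
  - by rewrite addn0.
have [p' [r [B [Ep [G' hr uB sB aB]]]]] := decomp G D0.
have sB2 := size_B hr uB aB.
have := IH p'; rewrite Ep size_cat size_map /= in sz.
case => [|//|ha hu hc hcnt [hsz hsum]]; first by lia.
rewrite /Inv Ep (comp_Dnum G' hr uB sB aB) (comp_cp G' hr uB sB aB) (comp_bp G' hr uB sB aB).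
rewrite (comp_Dnum G' hr uB sB aB).
split.
- rewrite all_cat !all_map; apply/andP; split.
    by apply/allP => y /(allP ha) /=; lia.
  by apply/allP => y /(allP aB) /=; lia.
- rewrite cat_uniq !map_inj_uniq ?hu ?uB; try exact: addnI.
  rewrite andbT /=; apply/hasPn => x /mapP[y yB ->]; apply/negP => /mapP[z zb e].
  have := allP aB y yB; have := allP ha z zb => /=; lia.
- rewrite all_cat all_nseq; apply/andP; split.
    by apply/allP => v /(allP hc) /=; lia.
  by rewrite oddM /= leqnn; apply/orP; right; lia.
- move=> i hi; rewrite count_cat count_nseq.
  case: (ltnP i (Dnum p').+1) => h.
    by have := hcnt i; lia.
  have -> : i = (Dnum p').+1 by lia.
  rewrite /= eqxx mul1n; lia.
- split.
    by rewrite !size_cat !size_map /=; lia.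
  rewrite !sumn_cat sumn_nseq !sumn_addn /=.
  rewrite -hsum -hsz.
  have -> : r = (r - size B) + size B by lia.
  set c := r - size B; nia.
Qed.

Lemma inv_G1 p : in_G1 p -> Inv p.
Proof. exact: inv_all (leqnn _). Qed.

Lemma mult_fmap p j : mult j (fmap p) = count_mem j (cp p) + count_mem j (bp p).
Proof.
by rewrite /mult fmapE -count_cat; apply: perm_count_mem; rewrite perm_sort.
Qed.

Lemma cnt_bp_le1 p j : in_G1 p -> count_mem j (bp p) <= 1.
Proof. by move=> /inv_G1 [_ hu _ _ _]; apply: count_uniq_le1. Qed.

Lemma cnt_bp_small p j : in_G1 p -> j < 2 * Dnum p + 2 -> count_mem j (bp p) = 0.
Proof.
move=> /inv_G1 [ha _ _ _ _] h; apply/count_memPn; apply/negP => /(allP ha) /=; lia.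
Qed.

Lemma cnt_cp_zero p j : in_G1 p -> (odd j || (2 * Dnum p < j) || (j == 0)) ->
  count_mem j (cp p) = 0.
Proof.
move=> /inv_G1 [_ _ hc _ _] h; apply/count_memPn; apply/negP => /(allP hc) /=.
move: h; case: (odd j) => //=; case/orP => /= h; [|move/eqP: h => ->//]; lia.
Qed.

Lemma R1_fmap p : in_G1 p -> R1 (fmap p) = 2 * Dnum p.
Proof.
move=> G; apply: R1_char.
  move=> x; rewrite mult_fmap; case: (leqP x (2 * Dnum p)) => // h.
  rewrite cnt_cp_zero //; last by rewrite h orbT.
  by have := cnt_bp_le1 x G; lia.
case: (posnP (Dnum p)) => D0; first by rewrite D0; left.
right; rewrite mult_fmap; case: (inv_G1 G) => _ _ _ hcnt _.
by have := hcnt (Dnum p); rewrite D0 leqnn => /(_ isT); lia.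
Qed.

Lemma sum_fmap p : in_G1 p -> sumn (fmap p) = sumn p.
Proof.
move=> G; case: (inv_G1 G) => _ _ _ _ [_ <-].
have pe : perm_eq (sort geq (cp p ++ bp p)) (cp p ++ bp p) by rewrite perm_sort.
by rewrite fmapE (perm_sumn pe) sumn_cat.
Qed.

Lemma A1_fmap p : in_G1 p -> in_A1 (fmap p).
Proof.
move=> G; have I := inv_G1 G; case: I => ha hu hc hcnt _.
split; [apply/andP; split|split; [|split]].
- exact: sort_sorted geq_total _.
- rewrite fmapE all_sort all_cat; apply/andP; split.
    by apply/allP => v /(allP hc) /= /and3P[].
  by apply/allP => v /(allP ha) /=; lia.
- move=> j oj; rewrite mult_fmap cnt_cp_zero ?oj //.
  exact: cnt_bp_le1.
- move=> j oj; rewrite R1_fmap // => h.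
  by rewrite mult_fmap cnt_cp_zero ?oj // cnt_bp_small.
- move=> j ej j0; rewrite R1_fmap // => h.
  rewrite mult_fmap.
  have e : j = 2 * j./2.
    by have := odd_double_half j; rewrite (negbTE ej) add0n -mul2n => ->.
  by have := hcnt j./2; rewrite -e; lia.
Qed.

Lemma arith1 r y : 2 <= r -> 2 <= y <= r - 2 -> y < r.
Proof. lia. Qed.

Lemma r_le D r r' c B B' X X' :
  all (fun y => 2 * D <= y) X -> all (fun y => 2 * D <= y) X' ->
  all (fun x => 2 <= x <= r - 2) B -> all (fun x => 2 <= x <= r' - 2) B' ->
  uniq B -> size B + c = r -> size B' + c = r' ->
  perm_eq (map (addn r) X ++ map (addn (2 * D)) B)
          (map (addn r') X' ++ map (addn (2 * D)) B') -> r <= r'.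
Proof.
move=> hX hX' hB hB' uB sB sB' pe; rewrite leqNgt; apply/negP => lt.
have := permP pe (fun y => y < r' + 2 * D); rewrite !count_cat !count_map.
have -> : count (preim (addn r) (fun y => y < r' + 2 * D)) X = 0.
  by apply/eqP; rewrite -leqn0 leqNgt -has_count; apply/hasPn => y /(allP hX) /=; lia.
have -> : count (preim (addn r') (fun y => y < r' + 2 * D)) X' = 0.
  by apply/eqP; rewrite -leqn0 leqNgt -has_count; apply/hasPn => y /(allP hX') /=; lia.
have -> : count (preim (addn (2 * D)) (fun y => y < r' + 2 * D)) B' = size B'.
  by apply/eqP; rewrite -all_count; apply/allP => y /(allP hB') /=; lia.
have -> : count (preim (addn (2 * D)) (fun y => y < r' + 2 * D)) B =
          count (fun x => x < r') B.
  by apply: eq_count => y /=; lia.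
have hc := count_predC (fun x => x < r') B.
have : count (predC (fun x => x < r')) B <= r - 1 - r'.
  rewrite -size_filter; apply: (@uniq_interval _ r').
    exact: filter_uniq.
  by apply/allP => x; rewrite mem_filter => /andP[/= h1 /(allP hB) /= h2]; lia.
lia.
Qed.

Lemma inj_step p q :
  (forall p' q', size p' < size p -> in_G1 p' -> in_G1 q' -> fmap p' = fmap q' -> p' = q') ->
  in_G1 p -> in_G1 q -> fmap p = fmap q -> p = q.
Proof.
move=> IH Gp Gq e.
have DD : Dnum p = Dnum q.
  by have := R1_fmap Gp; rewrite e R1_fmap //; lia.
have pe : perm_eq (cp p ++ bp p) (cp q ++ bp q).
  by apply/(perm_sortP geq_total geq_trans geq_anti).
case: (inv_G1 Gp) => hap _ hcp _ _; case: (inv_G1 Gq) => haq _ hcq _ _.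
have a1 : all (fun v => v <= 2 * Dnum p) (cp p).
  by apply/allP => v /(allP hcp) /and3P[].
have a2 : all (fun v => v <= 2 * Dnum p) (cp q).
  by apply/allP => v /(allP hcq) /and3P[]; rewrite DD.
have a3 : all (predC (fun v => v <= 2 * Dnum p)) (bp p).
  by apply/allP => v /(allP hap) /=; rewrite -ltnNge; lia.
have a4 : all (predC (fun v => v <= 2 * Dnum p)) (bp q).
  by apply/allP => v /(allP haq) /=; rewrite -ltnNge DD; lia.
have [pc pb] := split_perm a1 a2 a3 a4 pe.
case: (posnP (Dnum p)) => D0.
  rewrite (base_bp Gp D0) (base_bp Gq) -?DD // in pb.
  apply: (sorted_eq geq_trans geq_anti) => //.
    by case: Gp => /andP[].
  by case: Gq => /andP[].
have [p' [r [B [Ep [G' hr uB sB aB]]]]] := decomp Gp D0.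
have D0' : 0 < Dnum q by rewrite -DD.
have [q' [r' [B' [Eq [G'' hr' uB' sB' aB']]]]] := decomp Gq D0'.
have szp : size p' < size p by rewrite Ep size_cat size_map /= addnS ltnS leq_addr.
subst p q.
clear e pe a1 a2 a3 a4 hap hcp haq hcq D0 D0'.
rewrite (comp_cp G' hr uB sB aB) (comp_bp G' hr uB sB aB) in pc pb.
rewrite (comp_cp G'' hr' uB' sB' aB') (comp_bp G'' hr' uB' sB' aB') in pc pb.
rewrite (comp_Dnum G' hr uB sB aB) (comp_Dnum G'' hr' uB' sB' aB') in pc pb DD.
case: DD => DD.
rewrite -DD in pc pb.
have sB1 := size_B hr uB aB; have sB2 := size_B hr' uB' aB'.
have hc : r - size B = r' - size B'.
  have z1 : count_mem (2 * (Dnum p').+1) (cp p') = 0.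
    by apply: cnt_cp_zero => //; rewrite ltn_pmul2l // ltnSn orbT.
  have z2 : count_mem (2 * (Dnum p').+1) (cp q') = 0.
    by apply: cnt_cp_zero => //; rewrite -DD ltn_pmul2l // ltnSn orbT.
  have := perm_count_mem (2 * (Dnum p').+1) pc; rewrite !count_cat !count_nseq /= eqxx !mul1n.
  by rewrite z1 z2.
case: (inv_G1 G') => hX _ _ _ _; case: (inv_G1 G'') => hX' _ _ _ _.
have hX1 : all (fun y => 2 * (Dnum p').+1 <= y) (bp p').
  by apply/allP => y /(allP hX) /=; rewrite mulnS addnC.
have hX2 : all (fun y => 2 * (Dnum p').+1 <= y) (bp q').
  by apply/allP => y /(allP hX') /=; rewrite mulnS addnC DD.
have e1 : size B + (r - size B) = r by rewrite subnKC // (leq_trans (leq_addr 2 _) sB1).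
have e2 : size B' + (r - size B) = r' by rewrite hc subnKC // (leq_trans (leq_addr 2 _) sB2).
have rr : r = r'.
  apply/eqP; rewrite eqn_leq; apply/andP; split.
    exact: (r_le hX1 hX2 aB aB' uB e1 e2 pb).
  by apply: (r_le hX2 hX1 aB' aB uB' e2 e1); rewrite perm_sym.
clear e1 e2; subst r'.
have BB : B = B'.
  have := perm_filter (fun y => y < r + 2 * (Dnum p').+1) pb; rewrite !filter_cat !filter_map.
  set P := (fun y => y < r + 2 * (Dnum p').+1).
  have f1 : filter (preim (addn r) P) (bp p') = [::].
    by apply: filter_none; apply/allP => y /(allP hX1) /= hy; rewrite /P /= ltn_add2l -leqNgt.
  have f2 : filter (preim (addn r) P) (bp q') = [::].
    by apply: filter_none; apply/allP => y /(allP hX2) /= hy; rewrite /P /= ltn_add2l -leqNgt.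
  have f3 : filter (preim (addn (2 * (Dnum p').+1)) P) B = B.
    by apply: filter_all; apply/allP => y /(allP aB) /= hy; rewrite /P /= addnC ltn_add2r; apply: arith1 hr hy.
  have f4 : filter (preim (addn (2 * (Dnum p').+1)) P) B' = B'.
    by apply: filter_all; apply/allP => y /(allP aB') /= hy; rewrite /P /= addnC ltn_add2r; apply: arith1 hr hy.
  rewrite f1 f2 f3 f4 /=.
  move/perm_map_inj => /(_ (@addnI _)) pBB.
  exact: (sorted_eq geq_trans geq_anti sB sB' pBB).
subst B'.
rewrite perm_cat2r in pb; move/perm_map_inj: pb => /(_ (@addnI _)) pb.
rewrite perm_cat2r in pc.
have -> : p' = q'.
  apply: IH => //.
  by rewrite !fmapE; apply/(perm_sortP geq_total geq_trans geq_anti); apply: perm_cat.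
by [].
Qed.

Lemma inj_all n p q : size p <= n -> in_G1 p -> in_G1 q -> fmap p = fmap q -> p = q.
Proof.
elim: n p q => [|n IH] p q sz; apply: inj_step => p' q' h; first by lia.
by apply: IH; lia.
Qed.

Lemma cnt_S (l : seq nat) K T : K <= T ->
  count (fun y => K < y <= T.+1) l = count (fun y => K < y <= T) l + count_mem T.+1 l.
Proof.
move=> h; elim: l => //= y l ->.
have : (K < y <= T.+1) = (K < y <= T) + (y == T.+1) :> nat by lia.
by rewrite eq_sym; lia.
Qed.

Lemma cnt_sub_map (l : seq nat) r T j : r <= T.+1 ->
  count_mem j (map (subn^~ r) (filter (fun y => T < y) l)) =
  if T < j + r then count_mem (j + r) l else 0.
Proof.
move=> h; rewrite count_map count_filter; case: ifP => hj.
  by apply: eq_count => y /=; apply/idP/idP; [move/andP=> [/eqP ? ?]|move/eqP => ?]; lia.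
rewrite (eq_count (a2 := pred0)) ?count_pred0 // => y /=.
by apply/negP => /andP[/eqP ? ?]; lia.
Qed.

Lemma count_mem_pos (l : seq nat) : all (fun x => 0 < x) l -> count_mem 0 l = 0.
Proof. by move=> h; apply/count_memPn; apply/negP => /(allP h). Qed.

Lemma Dnum0 (l : seq nat) : (forall x, mult x l <= 1) -> Dnum l = 0.
Proof.
rewrite /Dnum; case E: (Rlist l) => [//|x s] h.
have := mem_Rlist l x; rewrite E inE eqxx => /esym/eqP e.
by have := h x; rewrite e.
Qed.

Lemma surj_base l : in_A1 l -> R1 l = 0 -> exists p, in_G1 p /\ fmap p = l.
Proof.
move=> [/andP[sl pos] [odd1 [oddz evn]]] R0.
have m1 : forall x, mult x l <= 1.
  case=> [|x]; first by rewrite /mult count_mem_pos.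
  by apply: mult_gt_R1; rewrite R0.
have D0 : Dnum l = 0 by apply: Dnum0.
have G : in_G1 l.
  split; first by rewrite /is_partition sl pos.
  split; first by apply: oddz; rewrite ?R0.
  by move=> j _; have := m1 j; have := m1 j.+1; lia.
exists l; split => //.
rewrite fmapE base_cp // base_bp //=.
by apply: sort_perm_sorted.
Qed.

Lemma four_way (K T v m : nat) : K <= T ->
  (v < K) * m + (K == v) * m + (T < v) * m + (K < v <= T) * m = m.
Proof. move=> h; case: (ltngtP v K) => h1; case: (leqP v T) => h2 /=; lia. Qed.

Lemma odd2S D : odd (2 * D).+1.
Proof. by rewrite oddS oddM. Qed.

Lemma surj_step D l :
  (forall l', in_A1 l' -> R1 l' = 2 * D -> exists p, in_G1 p /\ fmap p = l') ->
  in_A1 l -> R1 l = 2 * D.+1 -> exists p, in_G1 p /\ fmap p = l.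
Proof.
move=> IH A RK.
have [/andP[sl pos] [odd1 [oddz evn]]] := A.
have nK1 : count_mem (2 * D.+1).+1 l = 0.
  by have := oddz _ (odd2S D.+1); rewrite RK addn2 ltnSn => /(_ isT).
set K := 2 * D.+1 in RK nK1 *.
have hK : K = 2 * D + 2 by rewrite /K mulnS addnC.
clearbody K.
have cK : 2 <= mult K l.
  have := R1_max l; rewrite RK inE mem_filter => /orP[/eqP K0|/andP[h _] //].
  by move: K0; rewrite hK addn2.
set c := mult K l in cK.
have big : forall x, K < x -> mult x l <= 1 by move=> x h; apply: mult_gt_R1; rewrite RK.
pose cnt T := count (fun y => K < y <= T) l.
have ex : exists r, (c <= r) && (c + cnt (r + K - 1) <= r).
  exists (c + size l); rewrite leq_addr leq_add2l /=; exact: count_size.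
case: (ex_minnP ex) => r /andP[cr hr] hmin.
have g : c + cnt (r + K - 2) = r.
  apply/eqP; rewrite eqn_leq; apply/andP; split.
    apply: leq_trans hr; rewrite leq_add2l; apply: sub_count => y /=; lia.
  case: (ltngtP c r) => h; last by rewrite -h leq_addr.
    case: (boolP ((c <= r.-1) && (c + cnt (r.-1 + K - 1) <= r.-1))) => [/hmin|]; first by lia.
    rewrite (_ : r.-1 + K - 1 = r + K - 2); last by lia.
    by move=> H; lia.
  by lia.
have nr : count_mem (r + K - 1) l = 0.
  have e := @cnt_S l K (r + K - 2).
  rewrite (_ : (r + K - 2).+1 = r + K - 1) in e; last by lia.
  have := e (_ : K <= r + K - 2); rewrite -/(cnt _) -/(cnt _).
  by move=> /(_ _) e'; have := e' ltac:(lia); lia.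
have r2 : 2 <= r by lia.
pose B := map (subn^~ K) (filter (fun y => K < y <= r + K - 2) l).
have sizeB : size B = r - c by rewrite size_map size_filter -/(cnt _); lia.
have uB : uniq B.
  rewrite map_inj_in_uniq.
    apply: count_le1_uniq => x; rewrite count_mem_filter.
    case: (boolP (K < x <= r + K - 2)) => /= hx; last by rewrite mul0n.
    by rewrite mul1n; apply: big; case/andP: hx.
  move=> x y; rewrite !mem_filter => /andP[/andP[hx _] _] /andP[/andP[hy _] _] /= e.
  by lia.
have sB : sorted geq B.
  apply: homo_sorted; last exact: (sorted_filter geq_trans _ sl).
  by move=> a b /=; apply: leq_sub2r.
have aB : all (fun x => 2 <= x <= r - 2) B.
  apply/allP => x /mapP[y]; rewrite mem_filter => /andP[/andP[h1 h2] yl] -> /=.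
  have : y != K.+1.
    by apply/eqP => e; move: yl; rewrite e -has_pred1 has_count nK1.
  by move=> /eqP ?; lia.
pose Small := filter (fun y => y < K) l.
pose Bigr := map (subn^~ r) (filter (fun y => r + K - 2 < y) l).
pose l' := sort geq (Small ++ Bigr).
have e1 : map (addn r) Bigr = filter (fun y => r + K - 2 < y) l.
  rewrite /Bigr -map_comp map_id_in // => y; rewrite mem_filter => /andP[h _] /=; lia.
have e2 : map (addn K) B = filter (fun y => K < y <= r + K - 2) l.
  rewrite /B -map_comp map_id_in // => y; rewrite mem_filter => /andP[/andP[h _] _] /=; lia.
have rc : r - (r - c) = c by lia.
have KT : K <= r + K - 2 by lia.
have ml' : forall j, mult j l' = if j < K then mult j l else mult (j + r) l.
  move=> j; rewrite /mult /l'.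
  have pe : perm_eq (sort geq (Small ++ Bigr)) (Small ++ Bigr) by rewrite perm_sort.
  rewrite (perm_count_mem _ pe) count_cat count_mem_filter cnt_sub_map; last by lia.
  case: (ltnP j K) => hj /=.
    rewrite mul1n; case: ifP => h; last by rewrite addn0.
    rewrite (_ : j + r = r + K - 1) ?nr ?addn0 //; lia.
  by rewrite mul0n add0n ifT //; lia.
have RD : R1 l' = 2 * D.
  apply: R1_char.
    move=> x; rewrite ml'; case: (ltnP x K) => hx h.
      case: (leqP x (2 * D)) => // hx2.
      have ex1 : x = (2 * D).+1 by lia.
      by move: h; rewrite ex1 oddz ?odd2S // RK; lia.
    by have := big (x + r); lia.
  case: (posnP D) => D0; [left; lia|right].
  rewrite ml' ifT; last by lia.
  apply: evn; [by rewrite oddM|lia|lia].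
have A' : in_A1 l'.
  split; [apply/andP; split|split; [|split]].
  - exact: sort_sorted geq_total _.
  - rewrite /l' all_sort all_cat; apply/andP; split.
      by apply/allP => x; rewrite mem_filter => /andP[_ /(allP pos)].
    apply/allP => x /mapP[y]; rewrite mem_filter => /andP[h1 yl] -> /=.
    have : y != r + K - 1.
      by apply/eqP => e; move: yl; rewrite e -has_pred1 has_count nr.
    by move=> /eqP ?; lia.
  - move=> j oj; rewrite ml'; case: ifP => hj; first exact: odd1.
    by apply: big; lia.
  - move=> j oj; rewrite RD => hj; rewrite ml' ifT; last by lia.
    by apply: oddz => //; lia.
  - move=> j ej j0; rewrite RD => hj; rewrite ml' ifT; last by lia.
    by apply: evn => //; lia.
have [p' [G' fp']] := IH l' A' RD.
have DD : Dnum p' = D by have := R1_fmap G'; rewrite fp' RD; lia.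
exists (map (addn r) p' ++ r :: r :: B); split; first exact: comp_in_G1.
have hK' : 2 * (Dnum p').+1 = K by rewrite DD hK mulnS addnC.
rewrite fmapE (comp_cp G' r2 uB sB aB) (comp_bp G' r2 uB sB aB) (comp_Dnum G' r2 uB sB aB) hK'.
apply: sort_perm_sorted => //.
have pe' : perm_eq (cp p' ++ bp p') (Small ++ Bigr).
  by apply/(perm_sortP geq_total geq_trans geq_anti); rewrite -fmapE fp'.
case: (inv_G1 G') => ha _ hc _ _.
have s1 : all (fun v => v < K) (cp p').
  by apply/allP => v /(allP hc) /and3P[_ _]; rewrite DD; lia.
have s2 : all (fun v => v < K) Small.
  by apply/allP => v; rewrite mem_filter => /andP[].
have s3 : all (predC (fun v => v < K)) (bp p').
  by apply/allP => v /(allP ha) /=; rewrite DD -leqNgt; lia.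
have s4 : all (predC (fun v => v < K)) Bigr.
  apply/allP => x /mapP[y]; rewrite mem_filter => /andP[h1 yl] -> /=.
  have : y != r + K - 1.
    by apply/eqP => e; move: yl; rewrite e -has_pred1 has_count nr.
  by move=> /eqP ?; rewrite -leqNgt; lia.
have [pc pb] := split_perm s1 s2 s3 s4 pe'.
apply: perm_countP => v.
rewrite !count_cat (perm_count_mem _ pc) count_nseq.
rewrite (perm_count_mem _ (perm_map (addn r) pb)) e1 e2 /Small !count_mem_filter sizeB.
rewrite rc.
have key : (K == v) * c = (K == v) * count_mem v l.
  by rewrite /c /mult; case: eqP => [<-|]; rewrite ?mul0n.
by rewrite key addnA; exact: four_way.
Qed.

Lemma surj_all D : forall l, in_A1 l -> R1 l = 2 * D -> exists p, in_G1 p /\ fmap p = l.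
Proof.
elim: D => [|D IH] l A R; first by apply: surj_base => //; rewrite R.
exact: surj_step IH A R.
Qed.

Lemma R1_even l : in_A1 l -> ~~ odd (R1 l).
Proof.
move=> [_ [odd1 _]]; have := R1_max l; rewrite inE => /orP[/eqP -> //|].
rewrite mem_filter => /andP[h _]; apply/negP => o; have := odd1 _ o; lia.
Qed.

Theorem theorem3 :
  (forall p, in_G1 p -> in_A1 (fmap p)) /\
  (forall p q, in_G1 p -> in_G1 q -> fmap p = fmap q -> p = q) /\
  (forall l, in_A1 l -> exists p, in_G1 p /\ fmap p = l) /\
  (forall p, in_G1 p -> sumn (fmap p) = sumn p).
Proof.
split; first exact: A1_fmap.
split; first by move=> p q Gp Gq e; exact: inj_all (leqnn _) Gp Gq e.
split; last exact: sum_fmap.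
move=> l A; apply: (surj_all (D := (R1 l)./2)) => //.
have := odd_double_half (R1 l); rewrite (negbTE (R1_even A)) add0n -mul2n.
by move=> ->.
Qed.
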